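(* Let $A=\langle V,\textit{val}_0,\delta\rangle$ be an arena over disjoint finite Boolean sets $\mathbb{E},\mathbb{C}$, let $Pr\subseteq Pred(V)$ and $\mathbb{E}'\supseteq\mathbb{E}$ be finite, and let $M$ be an abstract counterstrategy, i.e. a Moore machine with input $2^{\mathbb{C}}$ and output $2^{\mathbb{E}'\cup Pr}$. Then $M$ is concretisable w.r.t. $A$ if and only if every trace $t\in L(M)$ is concretisable in $A$.
   Context: Theory setting: fix a first-order theory with constants $\mathcal{C}$. For finite $V$, $\mathcal{T}(V)$ are terms over $V$; $V_{prev}=\{v_{prev}\}$ fresh copies. State predicates: predicates over $\mathcal{T}(V)$; transition predicates: over $\mathcal{T}(V\cup V_{prev})$; $Pred(V)$ their union. Valuations $V\to\mathcal{C}$ form $\textit{Val}(V)$. Updates $U:V\to\mathcal{T}(V)$ act by $U(\textit{val})(v)=$ value of $U(v)$ under $\textit{val}$. $\textit{val}\models s$: $\textit{val}$ is a model of state predicate $s$; $(\textit{val},\textit{val}')\models t$: $\textit{val}_{prev}\cup\textit{val}'$ is a model of $t$, with $\textit{val}_{prev}(v_{prev})=\textit{val}(v)$. A valuation not assigning all variables of a formula does not satisfy it. For $S\subseteq T$, $\bigwedge\!\!\bigwedge_T S:=\bigwedge S\wedge\bigwedge_{s\in T\setminus S}\neg s$. Arena $A=\langle V,\textit{val}_0,\delta\rangle$: $\delta$ is a finite-domain partial function from Boolean combinations of $\mathbb{E}\cup\mathbb{C}\cup Pred(V)$ to updates with, for each $\textit{val}$, $E\subseteq\mathbb{E}$, $C\subseteq\mathbb{C}$,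 exactly one $f\in dom(\delta)$ with $(\textit{val},E\cup C)\models f$; $\delta(\textit{val},E\cup C):=\delta(f)(\textit{val})$. $L(A)$: words $w\in(\textit{Val}(V)\times2^{\mathbb{E}\cup\mathbb{C}})^\omega$ with $w(0)=(\textit{val}_0,\cdot)$ and $\textit{val}_{i+1}=\delta(\textit{val}_i,E_i\cup C_i)$, where $w(i)=(\textit{val}_i,E_i\cup C_i)$. An abstract word $a\in(2^{\mathbb{E}'\cup\mathbb{C}\cup Pr})^\omega$ abstracts $w$ if for all $i$, with $a(i)=E_i\cup C_i\cup Pr_i$, $w(i)=(\textit{val}_i,(E_i\cap\mathbb{E})\cup C_i)$, $\textit{val}_0\models\bigwedge\!\!\bigwedge_{Pr}Pr_0$, and $(\textit{val}_{i-1},\textit{val}_i)\models\bigwedge\!\!\bigwedge_{Pr}Pr_i$ for $i>0$; $\gamma(a)$ is the set of such $w$; $a$ is concretisable in $A$ if $L(A)\cap\gamma(a)\neq\emptyset$. Moore machine $M=\langle S,s_0,2^{\mathbb{C}},2^{\mathbb{E}'\cup Pr},\rightarrow,out\rangle$ with total deterministic $\rightarrow:S\times2^{\mathbb{C}}\to S$; a run produces the word $(C_i\cup out(s_i))_i$ where $s_{i+1}$ is the $C_i$-successor of $s_i$; $L(M)$ is the set of these traces. Concretisability of $M$: let $\preceq_A\subseteq\textit{Val}(V)\times S$ be the largest relation such that whenever $\textit{val}\preceq_A s$ with $out(s)=E\cup ST\cup TR$ ($E\subseteq\mathbb{E}'$, $ST$ state predicates, $TR$ transition predicates): (1) $\textit{val}\models\bigwedge\!\!\bigwedge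 ST$ (w.r.t. the state predicates of $Pr$); (2) for every $C\subseteq\mathbb{C}$, with $\textit{val}_C=\delta(\textit{val},(E\cap\mathbb{E})\cup C)$, $s_C$ the $C$-successor of $s$, $TR_C$ the transition predicates in $out(s_C)$: (a) $(\textit{val},\textit{val}_C)\models\bigwedge\!\!\bigwedge TR_C$ (w.r.t. the transition predicates of $Pr$) and (b) $\textit{val}_C\preceq_A s_C$. $M$ is concretisable w.r.t. $A$ if $\textit{val}_0\preceq_A s_0$. *)

(* Defs.v *)
From mathcomp Require Import all_boot.
Set Implicit Arguments. Unset Strict Implicit. Unset Printing Implicit Defensive.

(* A first-order theory over the variable set V, given semantically:
   - cst      : the constants (values) of the theory, C in the paper;
   - term     : terms T(V) over V, with their evaluation under a valuation;
   - spred    : state predicates (over T(V)), with satisfaction val |= s;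
   - tpred    : transition predicates (over T(V u V_prev)), with
                satisfaction (val, val') |= t, i.e. val_prev u val' |= t
                (first argument = previous valuation). *)
Record theory (V : Type) := Theory {
  cst : Type;
  term : Type;
  spred : Type;
  tpred : Type;
  eval_term : term -> (V -> cst) -> cst;
  sat_s : spred -> (V -> cst) -> Prop;
  sat_t : tpred -> (V -> cst) -> (V -> cst) -> Prop
}.

Inductive gform (V : Type) (Th : theory V) (E C : Type) :=
| GE of E
| GC of C
| GS of spred Th
| GT of tpred Th
| GNot of gform Th E C
| GAnd of gform Th E C & gform Th E C
| GOr of gform Th E C & gform Th E C.

Section Defs.
Variables (V : finType) (Th : theory V) (E C X Ps Pt : finType).
(* E' = E + X (so E is included in E'); Pr = state predicates ps (indexed
   by Ps) together with transition predicates pt (indexed by Pt). *)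
Variables (ps : Ps -> spred Th) (pt : Pt -> tpred Th).

Definition Val := V -> cst Th.

(* (val, E u C) |= f.  A transition-predicate atom is not satisfied by a
   single valuation (V_prev is unassigned). *)
Fixpoint gsat (val : Val) (Ein : {set E}) (Cin : {set C})
    (f : gform Th E C) : Prop :=
  match f with
  | GE e => e \in Ein
  | GC c => c \in Cin
  | GS s => sat_s s val
  | GT _ => False
  | GNot g => ~ gsat val Ein Cin g
  | GAnd g h => gsat val Ein Cin g /\ gsat val Ein Cin h
  | GOr g h => gsat val Ein Cin g \/ gsat val Ein Cin h
  end.

(* Arena <V, val0, delta>; delta is the finite-domain partial function
   a_guard i |-> a_upd i, for i in the finite index type a_I. *)
Record arena := Arena {
  a_val0 : Val;
  a_I : finType;
  a_guard : a_I -> gform Th E C;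
  a_upd : a_I -> V -> term Th
}.

Definition apply_upd (U : V -> term Th) (val : Val) : Val :=
  fun v => eval_term (U v) val.

(* delta is a function (distinct keys) and for all val, E, C exactly one
   guard in dom(delta) holds. *)
Definition arena_wf (A : arena) : Prop :=
  injective (a_guard (a:=A)) /\
  forall val (Ein : {set E}) (Cin : {set C}),
    exists! i : a_I A, gsat val Ein Cin (a_guard i).

Definition dstep (A : arena) (val : Val) (Ein : {set E}) (Cin : {set C})
    (val' : Val) : Prop :=
  exists i : a_I A, gsat val Ein Cin (a_guard i) /\ val' = apply_upd (a_upd i) val.

Definition cword := nat -> Val * ({set E} * {set C}).

Definition inL (A : arena) (w : cword) : Prop :=
  (w 0).1 = a_val0 A /\
  forall i, dstep A (w i).1 (w i).2.1 (w i).2.2 (w i.+1).1.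

Record aletter := ALetter {
  l_E : {set (E + X)%type};
  l_C : {set C};
  l_S : {set Ps};
  l_T : {set Pt}
}.
Definition aword := nat -> aletter.

Definition restrictE (Es : {set (E + X)%type}) : {set E} :=
  [set e | inl e \in Es].

Definition sat_st (val : Val) (ST : {set Ps}) : Prop :=
  forall p, p \in ST <-> sat_s (ps p) val.
Definition sat_tr (val val' : Val) (TR : {set Pt}) : Prop :=
  forall q, q \in TR <-> sat_t (pt q) val val'.

Definition abstracts (a : aword) (w : cword) : Prop :=
  forall i, (w i).2 = (restrictE (l_E (a i)), l_C (a i)) /\
    match i with
    | 0 => sat_st (w 0).1 (l_S (a 0))
    | j.+1 => sat_st (w i).1 (l_S (a i)) /\ sat_tr (w j).1 (w i).1 (l_T (a i))
    end.

Definition concretisable (A : arena) (a : aword) : Prop :=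
  exists w, inL A w /\ abstracts a w.

Record moore := Moore {
  m_S : finType;
  m_s0 : m_S;
  m_trans : m_S -> {set C} -> m_S;
  m_out : m_S -> {set (E + X)%type} * {set Ps} * {set Pt}
}.

Fixpoint mstate (M : moore) (ins : nat -> {set C}) (n : nat) : m_S M :=
  match n with
  | 0 => m_s0 M
  | n'.+1 => m_trans (mstate M ins n') (ins n')
  end.

Definition mtrace (M : moore) (ins : nat -> {set C}) : aword :=
  fun i => let o := m_out (mstate M ins i) in
    ALetter o.1.1 (ins i) o.1.2 o.2.

Definition inLM (M : moore) (a : aword) : Prop :=
  exists ins, forall i, a i = mtrace M ins i.

(* R satisfies the defining closure conditions of preceq_A *)
Definition simulation (A : arena) (M : moore) (R : Val -> m_S M -> Prop) : Prop :=
  forall val s, R val s ->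
    sat_st val (m_out s).1.2 /\
    forall (Cin : {set C}) val',
      dstep A val (restrictE (m_out s).1.1) Cin val' ->
      sat_tr val val' (m_out (m_trans s Cin)).2 /\ R val' (m_trans s Cin).

(* the largest such relation: union of all relations satisfying them *)
Definition preceq (A : arena) (M : moore) (val : Val) (s : m_S M) : Prop :=
  exists R, simulation A R /\ R val s.

Definition concretisableM (A : arena) (M : moore) : Prop :=
  preceq A (a_val0 A) (m_s0 M).

End Defs.

(* Main.v *)
Require Import Defs.
From mathcomp Require Import all_boot.
From Stdlib Require Import ClassicalEpsilon.

Fixpoint iterv (T : Type) (v0 : T) (st : T -> nat -> T) (n : nat) : T :=
  match n with 0 => v0 | n'.+1 => st (iterv T v0 st n') n' end.

Lemma dstep_det (V : finType) (Th : theory V) (E C : finType)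
  (A : arena Th E C) (HA : arena_wf A) val Ein Cin v1 v2 :
  dstep A val Ein Cin v1 -> dstep A val Ein Cin v2 -> v1 = v2.
Proof.
case: HA => _ HA [i1 [H1 ->]] [i2 [H2 ->]].
case: (HA val Ein Cin) => j [_ Hj].
by rewrite -(Hj _ H1) -(Hj _ H2).
Qed.
Arguments dstep_det {V Th E C A} HA {val Ein Cin v1 v2}.

Lemma dstep_ex (V : finType) (Th : theory V) (E C : finType)
  (A : arena Th E C) (HA : arena_wf A) val Ein Cin :
  exists v', dstep A val Ein Cin v'.
Proof.
case: HA => _ HA; case: (HA val Ein Cin) => j [Hj _].
by exists (apply_upd (a_upd j) val); exists j.
Qed.
Arguments dstep_ex {V Th E C A} HA val Ein Cin.

Lemma inL_det (V : finType) (Th : theory V) (E C : finType)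
  (A : arena Th E C) (HA : arena_wf A) (w1 w2 : cword Th E C) n :
  inL A w1 -> inL A w2 -> (forall i, i < n -> (w1 i).2 = (w2 i).2) ->
  (w1 n).1 = (w2 n).1.
Proof.
move=> [H10 H1] [H20 H2]; elim: n => [|n IH] Hlt; first by rewrite H10 H20.
have e1 := H1 n; have e2 := H2 n.
rewrite IH in e1; last by move=> i Hi; apply: Hlt; apply: ltnW.
rewrite (Hlt n (ltnSn n)) in e1.
exact: (dstep_det HA e1 e2).
Qed.
Arguments inL_det {V Th E C A} HA {w1 w2 n}.

Theorem mainTheorem3 (V : finType) (Th : theory V) (E C X Ps Pt : finType)
  (ps : Ps -> spred Th) (pt : Pt -> tpred Th)
  (ps_inj : injective ps) (pt_inj : injective pt)
  (A : arena Th E C) (HA : arena_wf A)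
  (M : moore E C X Ps Pt) :
  concretisableM ps pt A M <->
  (forall a : aword E C X Ps Pt, inLM M a -> concretisable ps pt A a).
Proof.
split.
- move=> [R [HR H0]] a [ins Hins].
  pose step (val : Val Th) (s : m_S M) (c : {set C}) := proj1_sig (constructive_indefinite_description _
      (dstep_ex HA val (restrictE (m_out s).1.1) c)).
  have Hstep : forall val s c, dstep A val (restrictE (m_out s).1.1) c (step val s c).
    by move=> val s c; rewrite /step; case: constructive_indefinite_description.
  pose vals := @iterv _ (a_val0 A) (fun v n => step v (mstate M ins n) (ins n)).
  have Hinv : forall n, R (vals n) (mstate M ins n).
    elim=> [|n IH] //=.
    by have [_ /(_ (ins n) _ (Hstep _ _ _)) []] := HR _ _ IH.
  exists (fun i => (vals i, (restrictE (l_E (a i)), l_C (a i)))); split.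
  + split=> // i /=; rewrite Hins /mtrace /=; exact: Hstep.
  + move=> [|j] /=; split=> //; rewrite !Hins /mtrace /=.
    * by have [] := HR _ _ (Hinv 0).
    * split; first by have [] := HR _ _ (Hinv j.+1).
      by have [_ /(_ (ins j) _ (Hstep _ _ _)) []] := HR _ _ (Hinv j).
- move=> Hall.
  have HinL : forall ins, inLM M (mtrace M ins) by move=> ins; exists ins.
  exists (fun val s => exists ins n w, s = mstate M ins n /\ inL A w /\
            abstracts ps pt (mtrace M ins) w /\ (w n).1 = val).
  split; last first.
    have [w [Hw Hab]] := Hall (mtrace M (fun _ => set0)) (HinL _).
    exists (fun _ => set0), 0, w; split => //; split => //; split => //; by case: Hw.
  move=> val s [ins [n [w [-> [Hw [Hab <-]]]]]].
  split.
    case: n => [|n]; first by have [_ H] := Hab 0.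
    by have [_ [H _]] := Hab n.+1.
  move=> Cin val' Hd.
  pose ins' := fun i => if i == n then Cin else ins i.
  have Hst : forall i, i <= n -> mstate M ins' i = mstate M ins i.
    elim=> [|i IH] Hi //=; rewrite IH ?(ltnW Hi) // /ins'.
    by rewrite (ltn_eqF Hi).
  have Hsn : mstate M ins' n.+1 = m_trans (mstate M ins n) Cin.
    by rewrite /= Hst // /ins' eqxx.
  have [w' [Hw' Hab']] := Hall (mtrace M ins') (HinL _).
  have Hn : (w' n).1 = (w n).1.
    apply: (inL_det HA Hw' Hw) => i Hi.
    have [-> _] := Hab' i; have [-> _] := Hab i.
    by rewrite /mtrace /= Hst ?(ltnW Hi) // /ins' (ltn_eqF Hi).
  have Hd' := (proj2 Hw') n.
  have [E1 _] := Hab' n.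
  rewrite E1 /= /mtrace /= Hst // /ins' eqxx Hn in Hd'.
  have Hv := dstep_det HA Hd Hd'.
  have [_ [_ Htr]] := Hab' n.+1.
  rewrite /mtrace /= in Htr.
  split.
    rewrite -Hsn Hv; rewrite Hn in Htr.
    move: Htr; rewrite /mtrace /=.
    by rewrite Hst // /ins' eqxx.
  exists ins', n.+1, w'; split; first by rewrite Hsn.
  by split=> //; split=> //; rewrite Hv.
Qed.
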